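(* Let $S_1 = A_3^*$ be the set of nonnegative integers whose base-$3$ expansion contains no digit $2$, and for $n\ge 2$ let $S_n$ be the set of positive integers $k$ such that every exponent in the prime factorization of $k$ (i.e. $v_p(k)$ for each prime $p\mid k$) lies in $S_{n-1}$. Then the asymptotic density $d(S_n)$ tends to $1$ as $n\to\infty$, but there is no $n$ for which $d(S_n)=1$.
   Context: Thus $S_2$ is the greedy geometric-progression-free set $G_3^*$ (Rankin's characterization). The asymptotic density of $A\subseteq\mathbb{N}$ is $d(A)=\lim_{N\to\infty}\frac{|A\cap\{1,\dots,N\}|}{N}$. *)

(* Defs.v *)
From Stdlib Require Import Reals.
From mathcomp Require Import all_boot.

Definition digit3 (m i : nat) : nat := (m %/ 3 ^ i) %% 3.

(* m has no digit 2 in base 3.  Digits at positions i >= m vanish since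
   3^i > m, so checking positions 0..m is the same as checking all positions
   (see noTwo3P). *)
Definition noTwo3 (m : nat) : bool :=
  all (fun i => digit3 m i != 2) (iota 0 m.+1).

Lemma noTwo3P (m : nat) : noTwo3 m = true <-> (forall i, digit3 m i <> 2).
Proof.
split.
- move=> /allP H i.
  case: (ltnP i m.+1) => Hi.
  + by apply/eqP; apply: H; rewrite mem_iota.
  + rewrite /digit3 divn_small //.
    by apply: (ltn_trans Hi); rewrite ltn_expl.

- move=> H; apply/allP => i _; apply/eqP; exact: H.
Qed.

(* Saux j = S_{j+1}:  Saux 0 = S_1 = A_3^*, and
   S_{n} = { k >= 1 | forall prime p | k, v_p(k) \in S_{n-1} }. *)
Fixpoint Saux (j : nat) (k : nat) : bool :=
  match j with
  | 0 => noTwo3 k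
  | j'.+1 => (0 < k) && all (fun p => Saux j' (logn p k)) (primes k)
  end.

(* S n = S_n for n >= 1 (S 0 is an irrelevant alias of S_1). *)
Definition S (n : nat) : nat -> bool := Saux n.-1.

Definition countUpTo (A : nat -> bool) (N : nat) : nat :=
  \sum_(1 <= k < N.+1) A k.

Definition has_density (A : nat -> bool) (d : R) : Prop :=
  Un_cv (fun N => Rdiv (INR (countUpTo A N)) (INR N)) d.

(* Main.v *)
Require Import Defs.
From Stdlib Require Import Reals Lra Lia IndefiniteDescription.
From mathcomp Require Import all_boot zify.

Lemma cnt_le (A B : nat -> bool) N :
  (forall k, 0 < k -> k <= N -> A k -> B k) -> countUpTo A N <= countUpTo B N.
Proof.
move=> H; rewrite /countUpTo big_nat_cond [X in _ <= X]big_nat_cond.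
apply: leq_sum => k /andP [/andP [k1 kN] _].
case Ak: (A k) => //=; by rewrite (H k) //.
Qed.

Lemma cnt_le_N A N : countUpTo A N <= N.
Proof.
rewrite /countUpTo.
apply: (@leq_trans (\sum_(1 <= k < N.+1) 1)).
  by apply: leq_sum => i _; apply: leq_b1.
by rewrite sum_nat_const_nat muln1 subn1.
Qed.

Lemma cnt_split (A B C : nat -> bool) N :
  (forall k, 0 < k -> k <= N -> (A k : nat) <= B k + C k) ->
  countUpTo A N <= countUpTo B N + countUpTo C N.
Proof.
move=> H; rewrite /countUpTo -big_split /= big_nat_cond [X in _ <= X]big_nat_cond.
apply: leq_sum => k /andP [/andP [k1 kN] _]; exact: H.
Qed.

Lemma cnt_compl (A : nat -> bool) N :
  countUpTo A N + countUpTo (fun k => ~~ A k) N = N.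
Proof.
rewrite /countUpTo -big_split /=.
rewrite (eq_bigr (fun _ => 1)); last by move=> i _; case: (A i).
by rewrite sum_nat_const_nat muln1 subn1.
Qed.

Lemma cnt_disj (A B : nat -> bool) N :
  (forall k, 0 < k -> k <= N -> A k -> ~~ B k) ->
  countUpTo A N + countUpTo B N <= N.
Proof.
move=> H; rewrite -{3}(cnt_compl A N) leq_add2l; apply: cnt_le => k k0 kN Bk.
by apply/negP => Ak; move: (H k k0 kN Ak); rewrite Bk.
Qed.

Lemma cnt_ge1 (A : nat -> bool) N k : 0 < k -> k <= N -> A k -> 1 <= countUpTo A N.
Proof.
move=> k0 kN Ak; rewrite /countUpTo (bigD1_seq k) /=.
- by rewrite Ak.
- by rewrite mem_index_iota k0 ltnS.
- exact: iota_uniq.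
Qed.

Lemma cnt_mult d N : \sum_(1 <= k < N.+1) (d %| k : nat) = N %/ d.
Proof.
case: (posnP d) => [->|d0].
  rewrite divn0 big_nat_cond big1 // => k /andP [/andP [k1 _] _].
  by rewrite dvd0n; case: k k1.
elim: N => [|N IH]; first by rewrite big_geq // div0n.
by rewrite big_nat_recr //= IH divnS // addnC.
Qed.

Lemma cnt_union (A : nat -> bool) N a b (f : nat -> nat) :
  (forall k, 0 < k -> k <= N -> A k -> exists j, a <= j < b /\ f j %| k) ->
  countUpTo A N <= \sum_(a <= j < b) N %/ f j.
Proof.
move=> H.
rewrite (eq_bigr (fun j => \sum_(1 <= k < N.+1) (f j %| k : nat))); last first.
  by move=> j _; rewrite cnt_mult.
rewrite exchange_big /= /countUpTo big_nat_cond [X in _ <= X]big_nat_cond.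
apply: leq_sum => k /andP [/andP [k1 kN] _].
case Ak: (A k) => //=.
have [j [/andP [aj jb] dj]] := H k k1 kN Ak.
rewrite (bigD1_seq j) /=; last exact: iota_uniq.
  by rewrite dj.
by rewrite mem_index_iota aj jb.
Qed.

Lemma key_tele x j : 2 <= j -> x %/ (j ^ 2) + x %/ j <= x %/ j.-1.
Proof.
move=> j2.
have j0 : 0 < j by lia.
set u := x %/ j ^ 2; set v := x %/ j.
have h1 : u * j <= v.
  by rewrite leq_divRL // -mulnA mulnn /u leq_divM.
have h2 : v * j <= x by rewrite -leq_divRL.
rewrite leq_divRL; last lia.
nia.
Qed.

Lemma tele_aux x a m : 2 <= a ->
  \sum_(a <= j < a + m) x %/ j ^ 2 + x %/ (a + m).-1 <= x %/ a.-1.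
Proof.
move=> a2; elim: m => [|m IH].
  by rewrite addn0 big_geq.
rewrite addnS big_nat_recr /=; last lia.
apply: leq_trans IH.
rewrite -addnA leq_add2l.
have := key_tele x (a + m) ltac:(lia).
by rewrite /=.
Qed.

Lemma tele x a b : 2 <= a -> \sum_(a <= j < b) x %/ j ^ 2 <= x %/ a.-1.
Proof.
move=> a2.
case: (leqP b a) => ba; first by rewrite big_geq.
have -> : b = a + (b - a) by lia.
exact: leq_trans (leq_addr _ _) (tele_aux x a (b - a) a2).
Qed.

Lemma div_pow_le x j e : 2 <= j -> 2 <= e -> x %/ j ^ e <= (x %/ 2 ^ (e - 2)) %/ j ^ 2.
Proof.
move=> j2 e2.
rewrite -divnMA; apply: leq_div2l.
  by rewrite muln_gt0 !expn_gt0 (ltnW j2).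
have -> : j ^ e = j ^ (e - 2) * j ^ 2 by rewrite -expnD subnK.
rewrite leq_mul2r; apply/orP; right.
elim: (e - 2) => // n IH; rewrite !expnS leq_mul //.
Qed.

Lemma sum_pow_le x a b e : 2 <= a -> 2 <= e ->
  \sum_(a <= j < b) x %/ j ^ e <= x %/ 2 ^ (e - 2).
Proof.
move=> a2 e2.
apply: (@leq_trans (\sum_(a <= j < b) (x %/ 2 ^ (e - 2)) %/ j ^ 2)).
  rewrite big_nat_cond [X in _ <= X]big_nat_cond.
  apply: leq_sum => j /andP [/andP [aj _] _]; apply: div_pow_le => //; lia.
apply: leq_trans (tele _ a b a2) _.
exact: leq_div.
Qed.

Lemma cnt_shift (B : nat -> bool) Q N : (forall k, B (k + Q) = B k) ->
  countUpTo B (Q + N) = countUpTo B Q + countUpTo B N.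
Proof.
move=> HB; rewrite /countUpTo (big_cat_nat _ (n := Q.+1)) //=; last lia.
congr (_ + _).
have -> : Q.+1 = 1 + Q by lia.
rewrite big_addn.
have -> : (Q + N).+1 - Q = N.+1 by lia.
by apply: eq_bigr => i _; rewrite HB.
Qed.

Lemma cnt_period (B : nat -> bool) Q N : (forall k, B (k + Q) = B k) ->
  countUpTo B N = N %/ Q * countUpTo B Q + countUpTo B (N %% Q).
Proof.
move=> HB.
rewrite {1}(divn_eq N Q).
elim: (N %/ Q) => [|q IH]; first by rewrite !mul0n add0n.
by rewrite mulSn -addnA cnt_shift // IH addnA.
Qed.

Local Open Scope R_scope.

Lemma INR_addn a b : INR (a + b)%N = INR a + INR b.
Proof. exact: plus_INR. Qed.
Lemma INR_muln a b : INR (a * b)%N = INR a * INR b.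
Proof. exact: mult_INR. Qed.
Lemma INR_leq a b : (a <= b)%N -> INR a <= INR b.
Proof. by move/leP; apply: le_INR. Qed.
Lemma INR_ltn a b : (a < b)%N -> INR a < INR b.
Proof. by move/ltP; apply: lt_INR. Qed.
Lemma INR_gt0 a : (0 < a)%N -> 0 < INR a.
Proof. by move=> h; apply: (INR_ltn 0 a h). Qed.

Lemma INR_div_le N K : (0 < K)%N -> INR (N %/ K) * INR K <= INR N.
Proof. move=> K0; rewrite -INR_muln; apply: INR_leq; exact: leq_divM. Qed.

Lemma INR_div_ge N K : (0 < K)%N -> INR N < (INR (N %/ K) + 1) * INR K.
Proof.
move=> K0. have -> : (INR (N %/ K) + 1 = INR (N %/ K).+1) by rewrite S_INR.
rewrite -INR_muln; apply: INR_ltn.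
by rewrite {1}(divn_eq N K) mulSn addnC ltn_add2r ltn_pmod.
Qed.

Lemma lim_le (u : nat -> R) l b N0 : Un_cv u l -> (forall N, (N0 <= N)%N -> u N <= b) -> l <= b.
Proof.
move=> Hu Hb; apply: Rnot_lt_le => Hlt.
have [N1 HN1] := Hu (l - b) ltac:(lra).
have := HN1 (maxn N0 N1) ltac:(apply/leP; exact: leq_maxr).
have := Hb (maxn N0 N1) (leq_maxl _ _).
rewrite /R_dist => h1 h2; apply Rabs_def2 in h2; lra.
Qed.

Lemma lim_ge (u : nat -> R) l b N0 : Un_cv u l -> (forall N, (N0 <= N)%N -> b <= u N) -> b <= l.
Proof.
move=> Hu Hb; apply: Rnot_lt_le => Hlt.
have [N1 HN1] := Hu (b - l) ltac:(lra).
have := HN1 (maxn N0 N1) ltac:(apply/leP; exact: leq_maxr).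
have := Hb (maxn N0 N1) (leq_maxl _ _).
rewrite /R_dist => h1 h2; apply Rabs_def2 in h2; lra.
Qed.

Lemma period_bound (B : nat -> bool) Q N : (0 < Q)%N -> (forall k, B (k + Q)%N = B k) ->
  Rabs (INR (countUpTo B N) - INR N * (INR (countUpTo B Q) / INR Q)) <= INR Q.
Proof.
move=> Q0 HB.
have HQ := INR_gt0 Q Q0.
have eN : INR N = INR (N %/ Q) * INR Q + INR (N %% Q).
  by rewrite -INR_muln -INR_addn -divn_eq.
rewrite (cnt_period _ _ N HB) INR_addn INR_muln eN.
set q := INR (N %/ Q); set c := INR (countUpTo B Q); set r := INR (N %% Q).
set r' := INR (countUpTo B (N %% Q)).
have hr : (r < INR Q) by apply: INR_ltn; exact: ltn_pmod.
have hr' : (r' <= r) by apply: INR_leq; exact: cnt_le_N.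
have hc : (c <= INR Q) by apply: INR_leq; exact: cnt_le_N.
have hc0 : (0 <= c) by apply: pos_INR.
have hr'0 : (0 <= r') by apply: pos_INR.
have -> : ((q * c + r') - (q * INR Q + r) * (c / INR Q) = r' - r * (c / INR Q)).
  by field; lra.
have ht : c / INR Q * INR Q = c by field; lra.
set t := c / INR Q in ht *.
have t0 : 0 <= t by nra.
have t1 : t <= 1 by nra.
apply: Rabs_le; split; nra.
Qed.

Local Close Scope R_scope.

Local Open Scope R_scope.

Lemma abs_le_inv x a : Rabs x <= a -> - a <= x <= a.
Proof.
move=> h; split; last by have := Rle_abs x; lra.
have := Rle_abs (- x); rewrite Rabs_Ropp; lra.
Qed.

Definition ratio (A : nat -> bool) N := INR (countUpTo A N) / INR N.

Lemma approx_bound (A B : nat -> bool) Q K N : (0 < Q)%N -> (0 < K)%N -> (0 < N)%N ->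
  (forall k, B (k + Q)%N = B k) ->
  (countUpTo A N <= countUpTo B N <= countUpTo A N + 2 * (N %/ K))%N ->
  Rabs (ratio A N - INR (countUpTo B Q) / INR Q) <= 2 / INR K + INR Q / INR N.
Proof.
move=> Q0 K0 N0 HB /andP [h1 h2].
have hP := abs_le_inv _ _ (period_bound B Q N Q0 HB).
set c := INR (countUpTo B Q) / INR Q in hP *.
have hn := INR_gt0 N N0. have hK := INR_gt0 K K0.
have hw := INR_div_le N K K0.
have e1 := INR_leq _ _ h1. have e2 := INR_leq _ _ h2.
rewrite INR_addn INR_muln in e2.
set a := INR (countUpTo A N) in e1 e2 *.
set b := INR (countUpTo B N) in e1 e2 hP *.
set w := INR (N %/ K) in hw e2 *.
set n := INR N in hn hw hP *.
have e3 : INR 2 = 2 by [].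
rewrite e3 in e2.
rewrite /ratio -/a -/n.
have ht : (a / n - c) * n = a - n * c by field; lra.
set t := a / n - c in ht *.
have hw' : w / n <= 1 / INR K.
  apply: (Rmult_le_reg_r (n * INR K)); first nra.
  have -> : w / n * (n * INR K) = w * INR K by field; lra.
  have -> : 1 / INR K * (n * INR K) = n by field; lra.
  lra.
have hq : INR Q / n * n = INR Q by field; lra.
have hw2 : w / n * n = w by field; lra.
set X := 2 * (w / n) + INR Q / n.
have hX : X * n = 2 * w + INR Q by rewrite /X; lra.
have -> : 2 / INR K + INR Q / n = (2 * (1 / INR K) + INR Q / n) by field; lra.
apply: (Rle_trans _ X); last by rewrite /X; lra.
apply: Rabs_le; split; nra.
Qed.

Lemma approx_dens (A : nat -> bool) :
  (forall K, (0 < K)%N -> exists (B : nat -> bool) Q, (0 < Q)%N /\ (forall k, B (k + Q)%N = B k) /\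
     forall N, (countUpTo A N <= countUpTo B N <= countUpTo A N + 2 * (N %/ K))%N) ->
  exists l, has_density A l.
Proof.
move=> H.
suff Hc : Cauchy_crit (ratio A).
  have [l Hl] := R_complete _ Hc; by exists l.
move=> eps eps0.
have [K HK] := INR_unbounded (8 / eps).
have K0 : (0 < K)%N.
  case: K HK => //=; move=> h; have : 0 < 8 / eps by apply: Rdiv_lt_0_compat; lra.
  lra.
have [B [Q [Q0 [HB HAB]]]] := H K K0.
have [N0 HN0] := INR_unbounded (4 * INR Q / eps).
have hQ := INR_gt0 Q Q0.
have hK := INR_gt0 K K0.
have N00 : (0 < N0)%N.
  case: N0 HN0 => //=; move=> h; have : 0 < 4 * INR Q / eps by apply: Rdiv_lt_0_compat; lra.
  lra.
have h8 : 2 / INR K < eps / 4.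
  apply: (Rmult_lt_reg_r (INR K * eps)); first nra.
  have -> : 2 / INR K * (INR K * eps) = 2 * eps by field; lra.
  have e8 : 8 / eps * eps = 8 by field; lra.
  have : INR K * eps > 8 by rewrite -e8; apply: Rmult_gt_compat_r.
  nra.
have hN : forall n, (N0 <= n)%coq_nat -> Rabs (ratio A n - INR (countUpTo B Q) / INR Q) < eps / 2.
  move=> n /leP hn.
  have n0 : (0 < n)%N by lia.
  have hn' := INR_leq _ _ hn. have hnp := INR_gt0 n n0.
  apply: Rle_lt_trans (approx_bound A B Q K n Q0 K0 n0 HB (HAB n)) _.
  suff : INR Q / INR n < eps / 4 by lra.
  apply: (Rmult_lt_reg_r (INR n * eps)); first nra.
  have -> : INR Q / INR n * (INR n * eps) = INR Q * eps by field; lra.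
  have e8 : 4 * INR Q / eps * eps = 4 * INR Q by field; lra.
  have : INR N0 * eps > 4 * INR Q by rewrite -e8; apply: Rmult_gt_compat_r.
  nra.
exists N0 => n m hn hm.
rewrite /R_dist.
have := hN n hn; have := hN m hm.
set c := INR (countUpTo B Q) / INR Q.
move=> h1 h2.
have -> : ratio A n - ratio A m = (ratio A n - c) + (c - ratio A m) by ring.
apply: Rle_lt_trans (Rabs_triang (ratio A n - c) (c - ratio A m)) _.
rewrite -(Rabs_Ropp (c - ratio A m)).
have -> : - (c - ratio A m) = ratio A m - c by ring.
lra.
Qed.

Local Close Scope R_scope.

Lemma Saux_one j : Saux j 1.
Proof. by case: j. Qed.

Lemma Saux_small j k : 0 < k -> k <= j.+1 -> Saux j k.
Proof.
elim: j k => [|j IH] k k0 kj.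
  by have -> : k = 1 by lia.
rewrite /= k0 /=; apply/allP => p pk.
have := pk; rewrite -logn_gt0 => l0.
apply: IH => //.
have := ltn_logl p k0; lia.
Qed.

Lemma Saux_missing j : exists e, 0 < e /\ ~~ Saux j e.
Proof.
elim: j => [|j [e [e0 He]]]; first by exists 2.
exists (2 ^ e); split; first by rewrite expn_gt0.
rewrite /= expn_gt0 /= primesX // primes_prime //= pfactorK //.
by rewrite andbT.
Qed.

Lemma count_le_min L M : count (fun i => i <= L) (iota 1 M) = minn L M.
Proof.
elim: M => [|M IH]; first by rewrite minn0.
have -> : M.+1 = M + 1 by lia.
rewrite iotaD count_cat IH /=.
case: (leqP (1 + M) L) => h; rewrite ?h /=; lia.
Qed.

Section Approx.
Variable j : nat.
Variable P : nat.
Hypothesis P2 : 2 <= P.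
Let E := Saux j.
Let A := Saux j.+1.
Let M := P + 2.
Definition hh p k := count (fun i => p ^ i %| k) (iota 1 M).
Definition gg e := (e == 0) || (M <= e) || E e.
Definition BB k := all (fun p => prime p ==> gg (hh p k)) (iota 0 P).
Definition QQ := P`! ^ M.

Lemma hh_min p k : prime p -> 0 < k -> hh p k = minn (logn p k) M.
Proof.
move=> pp k0; rewrite /hh -count_le_min; apply: eq_in_count => i _.
by rewrite pfactor_dvdn.
Qed.

Lemma QQ_pos : 0 < QQ.
Proof. by rewrite expn_gt0 fact_gt0. Qed.

Lemma BB_period k : BB (k + QQ) = BB k.
Proof.
rewrite /BB; apply: eq_in_all => p; rewrite mem_iota => /andP [_ pP].
case: (boolP (prime p)) => //= pp.
congr (gg _); rewrite /hh; apply: eq_in_count => i; rewrite mem_iota => /andP [i1 iM].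
rewrite addnC dvdn_addr //.
apply: (@dvdn_trans (P`! ^ i)).
  by apply: dvdn_exp2r; apply: dvdn_fact; rewrite prime_gt0 //=; exact: ltnW.
by apply: dvdn_exp2l; lia.
Qed.

Lemma A_BB k : 0 < k -> A k -> BB k.
Proof.
move=> k0; rewrite /A /= k0 /= => /allP HA.
apply/allP => p _; apply/implyP => pp.
rewrite /gg hh_min //.
case: (posnP (logn p k)) => L0; first by rewrite L0 min0n.
case: (leqP M (logn p k)) => LM.
  by rewrite leqnn orbT.
rewrite /E HA ?orbT //.
by rewrite -logn_gt0.
Qed.

Lemma BB_notA k : 0 < k -> BB k -> ~~ A k ->
  (exists p, 2 <= p < P /\ p ^ M %| k) \/ (exists p, P <= p < k.+1 /\ p ^ 2 %| k).
Proof.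
move=> k0 HB; rewrite /A /= k0 /= => /allPn [p pk HE].
have pp : prime p by move: pk; rewrite mem_primes => /and3P [].
have pdk : p %| k by move: pk; rewrite mem_primes => /and3P [].
have L0 : 0 < logn p k by rewrite logn_gt0.
have L1 : logn p k != 1 by apply/eqP => h; move: HE; rewrite h Saux_one.
have p2 : 2 <= p by apply: prime_gt1.
have pk' : p <= k by apply: dvdn_leq.
case: (ltnP p P) => pP.
- left; exists p; split; first by rewrite p2.
  move/allP: HB => /(_ p); rewrite mem_iota add0n pP /= pp /= => /(_ isT).
  rewrite /gg hh_min //.
  case/orP => [/orP [h|h]|h].
  + by move: h => /eqP; lia.
  + rewrite pfactor_dvdn //; move: h; lia.
  + case: (leqP M (logn p k)) h => h1 h2.
      by rewrite pfactor_dvdn.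
    by move: HE; rewrite /E in h2; rewrite h2.
- right; exists p; split; first by rewrite pP ltnS.
  rewrite pfactor_dvdn //; lia.
Qed.

End Approx.

Lemma approx_count j K N : 0 < K ->
  countUpTo (Saux j.+1) N <= countUpTo (BB j K.+1) N <= countUpTo (Saux j.+1) N + 2 * (N %/ K).
Proof.
move=> K0.
have P2 : 2 <= K.+1 by lia.
apply/andP; split.
  by apply: cnt_le => k k0 _; apply: A_BB.
set C := fun k => BB j K.+1 k && ~~ Saux j.+1 k.
apply: leq_trans (@cnt_split _ (Saux j.+1) C N _) _.
  move=> k _ _; rewrite /C; by case: (BB j K.+1 k); case: (Saux j.+1 k).
rewrite leq_add2l.
set X := fun k => has (fun p => p ^ (K.+1 + 2) %| k) (index_iota 2 K.+1).
set Y := fun k => has (fun p => p ^ 2 %| k) (index_iota K.+1 N.+1).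
apply: leq_trans (@cnt_split _ X Y N _) _.
  move=> k k0 kN; rewrite /C.
  case Bk: (BB j K.+1 k); last by [].
  case Ak: (Saux j.+1 k); first by [].
  have [[p [/andP [p2 pP] pd]]|[p [/andP [pP pk] pd]]] := BB_notA j K.+1 P2 k k0 Bk (negbT Ak).
  + suff -> : X k by [].
    by apply/hasP; exists p => //; rewrite mem_index_iota p2 pP.
  + suff -> : Y k by rewrite addn1.
    by apply/hasP; exists p => //; rewrite mem_index_iota pP /=; lia.
rewrite mul2n -addnn; apply: leq_add.
- apply: leq_trans (cnt_union X N 2 K.+1 (fun p => p ^ (K.+1 + 2)) _) _.
    by move=> k _ _ /hasP [p]; rewrite mem_index_iota => pr pd; exists p.
  apply: leq_trans (sum_pow_le N 2 K.+1 (K.+1 + 2) _ _) _; [done|lia|].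
  apply: leq_div2l => //.
  have -> : K.+1 + 2 - 2 = K.+1 by lia.
  have := @ltn_expl 2 K.+1 isT; lia.
- apply: leq_trans (cnt_union Y N K.+1 N.+1 (fun p => p ^ 2) _) _.
    by move=> k _ _ /hasP [p]; rewrite mem_index_iota => pr pd; exists p.
  exact: tele.
Qed.

Lemma digit3_succ m i : digit3 m i.+1 = digit3 (m %/ 3) i.
Proof. by rewrite /digit3 expnS divnMA. Qed.

Lemma noTwo3_tail m d : d < 3 -> noTwo3 (m * 3 + d) -> noTwo3 m && (d != 2).
Proof.
move=> d3 /noTwo3P H.
have e : (m * 3 + d) %/ 3 = m by rewrite divnMDl // divn_small // addn0.
apply/andP; split.
  apply/noTwo3P => i; have := H i.+1; by rewrite digit3_succ e.
have := H 0; rewrite /digit3 expn0 divn1 modnMDl modn_small //.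
by move=> h; apply/eqP.
Qed.

Lemma sum3 m : \sum_(0 <= k < m * 3) (noTwo3 k : nat) <= 2 * \sum_(0 <= k < m) (noTwo3 k : nat).
Proof.
elim: m => [|m IH]; first by rewrite !big_geq.
have -> : m.+1 * 3 = (m * 3 + 2).+1 by lia.
have -> : m * 3 + 2 = (m * 3 + 1).+1 by lia.
have -> : m * 3 + 1 = (m * 3 + 0).+1 by lia.
rewrite big_nat_recr /=; last lia.
rewrite big_nat_recr /=; last lia.
rewrite big_nat_recr /=; last lia.
rewrite addn0 big_nat_recr //=.
have G : forall d, d < 3 -> noTwo3 (m * 3 + d) -> noTwo3 m && (d != 2) := noTwo3_tail m.
have h0 : (noTwo3 (m * 3) : nat) <= noTwo3 m.
  case h: (noTwo3 (m * 3)) => //; have := G 0 isT; rewrite addn0 h => /(_ isT) /andP [-> _] //.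
have h1 : (noTwo3 (m * 3).+1 : nat) <= noTwo3 m.
  case h: (noTwo3 (m * 3).+1) => //; have := G 1 isT; rewrite addn1 h => /(_ isT) /andP [-> _] //.
have h2 : (noTwo3 (m * 3).+2 : nat) = 0.
  case h: (noTwo3 (m * 3).+2) => //; have := G 2 isT; rewrite addn2 h => /(_ isT) /andP [_ ] //.
lia.
Qed.

Lemma sum_pow3 t : \sum_(0 <= k < 3 ^ t) (noTwo3 k : nat) <= 2 ^ t.
Proof.
elim: t => [|t IH]; first by rewrite expn0 big_nat1.
rewrite expnSr (expnSr 2); apply: leq_trans (sum3 _) _.
by rewrite mulnC leq_mul2r IH orbT.
Qed.

Lemma cnt1_le N : countUpTo noTwo3 N <= 2 ^ (trunc_log 3 N).+1.
Proof.
apply: leq_trans (sum_pow3 _).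
have hN := @trunc_log_ltn 3 N isT.
rewrite (big_cat_nat _ (n := N.+1)) //=.
apply: leq_trans (leq_addr _ _); rewrite big_ltn // /countUpTo; exact: leq_addl.
Qed.

Local Open Scope R_scope.
Lemma INR_expn m n : INR (m ^ n)%N = INR m ^ n.
Proof. elim: n => [|n IH]; first by rewrite expn0. by rewrite expnS INR_muln IH. Qed.

Lemma dens_S1 : has_density (S 1) 0.
Proof.
move=> eps eps0.
have [T HT] := pow_lt_1_zero (2/3) ltac:(rewrite Rabs_pos_eq; lra) (eps / 2) ltac:(lra).
exists (3 ^ T)%N => N /leP hN.
rewrite /R_dist Rminus_0_r.
have N0 : (0 < N)%N by have := expn_gt0 3 T; lia.
set t := trunc_log 3 N.
have tT : (T <= t)%N by apply: trunc_log_max.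
have h3 : (3 ^ t <= N)%N by apply: trunc_logP.
have hc := INR_leq _ _ (cnt1_le N).
have hc0 := pos_INR (countUpTo noTwo3 N).
have hN' := INR_leq _ _ h3.
rewrite !INR_expn -/t in hc hN'.
have e2 : INR 2 = 2 by simpl; lra.
have e3 : INR 3 = 3 by simpl; lra.
rewrite e2 in hc; rewrite e3 in hN'.
have hn := INR_gt0 N N0.
have hpow := HT t ltac:(apply/leP; exact: tT).
rewrite Rabs_pos_eq in hpow; last by apply: pow_le; lra.
have e23 : (2 / 3) ^ t * 3 ^ t = 2 ^ t.
  rewrite -Rpow_mult_distr; congr (_ ^ _); field.
have h3p : 0 < 3 ^ t by apply: pow_lt; lra.
have hr : INR (countUpTo noTwo3 N) / INR N * INR N = INR (countUpTo noTwo3 N) by field; lra.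
set r := INR (countUpTo noTwo3 N) / INR N in hr *.
have r0 : 0 <= r by nra.
rewrite Rabs_pos_eq //.
(* r * N <= 2 * 2^t = 2 * (2/3)^t * 3^t <= 2 * (2/3)^t * N *)
have hq : 0 <= (2/3) ^ t by apply: pow_le; lra.
have hx : r * INR N <= 2 * ((2 / 3) ^ t * 3 ^ t) by rewrite hr e23; simpl in hc; lra.
have hy : (2 / 3) ^ t * 3 ^ t <= (2/3) ^ t * INR N by apply: Rmult_le_compat_l.
have : r * INR N <= 2 * (2 / 3) ^ t * INR N by nra.
move=> h; have : r <= 2 * (2/3) ^ t by nra.
lra.
Qed.

Local Close Scope R_scope.

Local Open Scope R_scope.

Lemma dens_exists j : exists l, has_density (Saux j.+1) l.
Proof.
apply: approx_dens => K K0.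
exists (BB j K.+1), (QQ K.+1); split; first exact: QQ_pos.
split; first by apply: BB_period; lia.
move=> N; exact: approx_count.
Qed.

Lemma ratio_le1 A N : (0 < N)%N -> ratio A N <= 1.
Proof.
move=> N0; have hn := INR_gt0 N N0.
have hc := INR_leq _ _ (cnt_le_N A N).
rewrite /ratio.
have e : INR (countUpTo A N) / INR N * INR N = INR (countUpTo A N) by field; lra.
nra.
Qed.

Lemma dens_le1 A l : has_density A l -> l <= 1.
Proof. move=> H; apply: (lim_le _ _ _ 1%N H) => N N0; exact: ratio_le1. Qed.

Lemma dens_lower i l : has_density (Saux i.+1) l -> 1 - 1 / INR (2 ^ i)%N <= l.
Proof.
move=> H; apply: (lim_ge _ _ _ 1%N H) => N N0.
have hc : (countUpTo (fun k => ~~ Saux i.+1 k) N <= N %/ 2 ^ i)%N.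
  apply: leq_trans (cnt_union _ N 2 N.+1 (fun p => p ^ (i + 2))%N _) _.
    move=> k k0 kN; rewrite /= k0 /= => /allPn [p pk HE].
    have pp : prime p by move: pk; rewrite mem_primes => /and3P [].
    have pdk : (p %| k)%N by move: pk; rewrite mem_primes => /and3P [].
    have L0 : (0 < logn p k)%N by rewrite logn_gt0.
    have p2 : (2 <= p)%N by apply: prime_gt1.
    have pk' : (p <= k)%N by apply: dvdn_leq.
    exists p; split; first by apply/andP; split => //; lia.
    rewrite pfactor_dvdn //.
    case: (leqP (i + 2) (logn p k)) => // hL.
    by move: HE; rewrite Saux_small //; lia.
  have := sum_pow_le N 2 N.+1 (i + 2) isT ltac:(lia).
  by have -> : (i + 2 - 2 = i)%N by lia.
have e := cnt_compl (Saux i.+1) N.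
have hn := INR_gt0 N N0.
have hp : (0 < 2 ^ i)%N by rewrite expn_gt0.
have hP := INR_gt0 _ hp.
have hw := INR_div_le N _ hp.
have hc' := INR_leq _ _ hc.
have e' : INR (countUpTo (Saux i.+1) N) + INR (countUpTo (fun k => ~~ Saux i.+1 k) N) = INR N.
  by rewrite -INR_addn e.
rewrite /ratio.
set a := INR (countUpTo (Saux i.+1) N) in e' *.
set b := INR (countUpTo (fun k => ~~ Saux i.+1 k) N) in e' hc' *.
set w := INR (N %/ 2 ^ i) in hw hc' *.
set q := INR (2 ^ i)%N in hP hw *.
have h1 : a / INR N * INR N = a by field; lra.
have h2 : 1 / q * q = 1 by field; lra.
set x := a / INR N in h1 *. set y := 1 / q in h2 *.
(* x N = a >= N - w, w q <= N  => x >= 1 - y *)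
have : (1 - y) * INR N * q <= x * INR N * q by nra.
move=> h; apply: (Rmult_le_reg_r (INR N * q)); first nra.
nra.
Qed.

Lemma dens_lt1 i l : has_density (Saux i.+1) l -> l < 1.
Proof.
move=> H.
have [e [e0 He]] := Saux_missing i.
set Q := (2 ^ e.+1)%N.
have Q0 : (0 < Q)%N by rewrite expn_gt0.
set C := fun k => (2 ^ e %| k)%N && ~~ (2 ^ e.+1 %| k)%N.
have HC : forall k, C (k + Q)%N = C k.
  move=> k; rewrite /C addnC !dvdn_addr //.
  by rewrite /Q dvdn_exp2l.
have C1 : (1 <= countUpTo C Q)%N.
  apply: (cnt_ge1 _ _ (2 ^ e)); first by rewrite expn_gt0.
    by rewrite /Q leq_exp2l.
  have p0 : (0 < 2 ^ e)%N by rewrite expn_gt0.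
  rewrite /C dvdnn /=; apply/negP => hd; have := dvdn_leq p0 hd.
  rewrite leq_exp2l //; lia.
have HCN : forall N, (N %/ Q <= countUpTo C N)%N.
  move=> N; rewrite (cnt_period _ _ N HC).
  apply: leq_trans (leq_addr _ _); rewrite -{1}(muln1 (N %/ Q)) leq_mul2l C1 orbT //.
have Hdis : forall N, (countUpTo (Saux i.+1) N + countUpTo C N <= N)%N.
  move=> N; apply: cnt_disj => k k0 _; rewrite /= k0 /= => /allP HA.
  apply/negP; rewrite /C => /andP [d1 d2].
  have L : logn 2 k = e.
    move: d1 d2; rewrite !pfactor_dvdn //; lia.
  have : (2%N \in primes k) by rewrite -logn_gt0 L.
  by move/HA; rewrite L (negbTE He).
have hQ := INR_gt0 Q Q0.
suff : l <= 1 - 1 / (2 * INR Q).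
  have : 0 < 1 / (2 * INR Q) by apply: Rdiv_lt_0_compat; lra.
  lra.
apply: (lim_le _ _ _ (2 * Q)%N H) => N hN.
have N0 : (0 < N)%N by lia.
have hn := INR_gt0 N N0.
have h1 := INR_leq _ _ (Hdis N).
have h2 := INR_leq _ _ (HCN N).
have h3 := INR_div_ge N Q Q0.
have h4 := INR_leq _ _ hN.
rewrite INR_addn in h1. rewrite INR_muln in h4.
have e2 : INR 2 = 2 by simpl; lra.
rewrite e2 in h4.
rewrite /ratio.
set a := INR (countUpTo (Saux i.+1) N) in h1 *.
set c := INR (countUpTo C N) in h1 h2.
set w := INR (N %/ Q) in h2 h3.
have hx : a / INR N * INR N = a by field; lra.
have hy : 1 / (2 * INR Q) * (2 * INR Q) = 1 by field; lra.
set x := a / INR N in hx *. set y := 1 / (2 * INR Q) in hy *.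
(* w Q + Q > N >= 2Q  => w > N/Q - 1 >= N/(2Q) ; a <= N - w *)
have hwq : w * INR Q >= INR N / 2 by nra.
apply: (Rmult_le_reg_r (INR N * (2 * INR Q))); first nra.
nra.
Qed.

Local Close Scope R_scope.

Local Open Scope R_scope.

Lemma dens_n n : exists l, ((1 <= n)%N -> has_density (S n) l /\ l <> 1) /\ l <= 1 /\
  ((3 <= n)%N -> 1 - 1 / INR (2 ^ (n - 2))%N <= l).
Proof.
case: n => [|[|i]].
- exists 0; split => //; split => //; lra.
- exists 0; split; first by move=> _; split; [exact: dens_S1 | lra].
  split => //; lra.
- have [l Hl] := dens_exists i.
  exists l; split; first by move=> _; split => //; have := dens_lt1 _ _ Hl; lra.
  split; first exact: dens_le1 Hl.
  move=> _; have -> : (i.+2 - 2 = i)%N by lia.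
  exact: dens_lower Hl.
Qed.

Lemma main_aux :
  exists d : nat -> R,
    (forall n : nat, (1 <= n)%N -> has_density (S n) (d n)) /\
    Un_cv d R1 /\
    (forall n : nat, (1 <= n)%N -> d n <> R1).
Proof.
pose d := fun n => proj1_sig (constructive_indefinite_description _ (dens_n n)).
have Hd : forall n, _ := fun n => proj2_sig (constructive_indefinite_description _ (dens_n n)).
exists d; split; [|split].
- by move=> n n1; have [H _] := Hd n; case: (H n1).
- move=> eps eps0.
  have [T HT] := INR_unbounded (1 / eps).
  exists (T + 3)%N => n /leP hn.
  have [_ [h1 h2]] := Hd n.
  have h3 := h2 ltac:(lia).
  rewrite -/(d n) in h1 h3.
  rewrite /R_dist Rabs_minus_sym Rabs_pos_eq; last by lra.
  have hp : (T < 2 ^ (n - 2))%N.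
    have := @ltn_expl 2 (n - 2) isT; lia.
  have hp' := INR_ltn _ _ hp.
  have hq : 0 < INR (2 ^ (n - 2))%N by apply: INR_gt0; rewrite expn_gt0.
  suff : 1 / INR (2 ^ (n - 2))%N < eps by lra.
  apply: (Rmult_lt_reg_r (INR (2 ^ (n - 2))%N)) => //.
  have -> : 1 / INR (2 ^ (n - 2))%N * INR (2 ^ (n - 2))%N = 1 by field; lra.
  have e1 : 1 / eps * eps = 1 by field; lra.
  nra.
- by move=> n n1; have [H _] := Hd n; case: (H n1).
Qed.

Local Close Scope R_scope.

Theorem mainTheorem8 :
  exists d : nat -> R,
    (forall n : nat, 1 <= n -> has_density (S n) (d n)) /\
    Un_cv d R1 /\
    (forall n : nat, 1 <= n -> d n <> R1).
Proof. exact: main_aux. Qed.
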